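(* For every locale $X$, the category $FrmSh(X)$ of frame sheaves on $X$ and frame morphisms is equivalent to the coslice category $\mathcal{O}(X)/Frm$ of frames under $\mathcal{O}(X)$. The equivalence is given by the functor $\Phi:\mathcal{O}(X)/Frm\to FrmSh(X)$ sending a frame homomorphism $f:\mathcal{O}(X)\to L$ to the sheaf $\Phi(f)(u)=\{x\in L\mid x\le f(u)\}$ with restriction maps $x\mapsto x\wedge f(v)$ ($v\le u$), and a morphism $h:L\to M$ with $hf=g$ to its restrictions $\Phi(f)(u)\to\Phi(g)(u)$; a quasi-inverse is $\Psi:FrmSh(X)\to\mathcal{O}(X)/Frm$, $\Psi(F)=F(1_X)$ with the frame homomorphism $u\mapsto l_{u,1_X}(\top_{F(u)})$, and $\Psi(\alpha)=\alpha_{1_X}$.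
   Context: Let $X$ be a locale with frame of opens $\mathcal{O}(X)$ and top $1_X$. A posheaf on $X$ is a sheaf of sets $F$ with (POS1) each $F(u)$ a poset; (POS2) restriction maps $F(u)\to F(v)$, $x\mapsto x|_v$ ($v\le u$), order-preserving; (POS3) if $u=\bigvee_i u_i$ and $s,t\in F(u)$ satisfy $s|_{u_i}\le t|_{u_i}$ for all $i$, then $s\le t$. A frame sheaf is a posheaf $F$ such that each $F(u)$ is a frame, each restriction map $F(u)\to F(v)$ ($v\le u$) is surjective and has a left adjoint $l_{v,u}:F(v)\to F(u)$ and a right adjoint, and $x\wedge l_{v,u}(y)=l_{v,u}(x|_v\wedge y)$ for $x\in F(u)$, $y\in F(v)$. A frame morphism $\alpha:F\to G$ of frame sheaves is a morphism of sheaves such that each $\alpha_u$ is a frame homomorphism and $\alpha_u\circ l^F_{v,u}=l^G_{v,u}\circ\alpha_v$ for all $v\le u$. $\top_{F(u)}$ is the top element of $F(u)$. Objects of $\mathcal{O}(X)/Frm$ are frame homomorphisms $f:\mathcal{O}(X)\to L$; morphisms $f\to g$ (with $g:\mathcal{O}(X)\to M$) are frame homomorphisms $h:L\to M$ with $hf=g$. *)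

(* Defs.v *)
From Stdlib Require Import Classical.

Set Implicit Arguments.
Unset Strict Implicit.

Record FrameOps := {
  fcar :> Type;
  fle : fcar -> fcar -> Prop;
  fmeet : fcar -> fcar -> fcar;
  fsup : forall I : Type, (I -> fcar) -> fcar;
  ftop : fcar
}.

Arguments fle {f} _ _.
Arguments fmeet {f} _ _.
Arguments fsup {f} I _.
Arguments ftop {f}.

Record is_frame (L : FrameOps) : Prop := {
  fr_refl : forall x : L, fle x x;
  fr_trans : forall x y z : L, fle x y -> fle y z -> fle x z;
  fr_antisym : forall x y : L, fle x y -> fle y x -> x = y;
  fr_meet : forall x y z : L, fle z (fmeet x y) <-> (fle z x /\ fle z y);
  fr_top : forall x : L, fle x ftop;
  fr_sup : forall (I : Type) (g : I -> L) (z : L),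
      fle (fsup I g) z <-> (forall i, fle (g i) z);
  fr_distr : forall (x : L) (I : Type) (g : I -> L),
      fmeet x (fsup I g) = fsup I (fun i => fmeet x (g i))
}.

Record is_frame_hom (L M : FrameOps) (h : L -> M) : Prop := {
  fh_top : h ftop = ftop;
  fh_meet : forall x y : L, h (fmeet x y) = fmeet (h x) (h y);
  fh_sup : forall (I : Type) (g : I -> L), h (fsup I g) = fsup I (fun i => h (g i))
}.

Record is_poset (T : Type) (le : T -> T -> Prop) : Prop := {
  po_refl : forall x, le x x;
  po_trans : forall x y z, le x y -> le y z -> le x z;
  po_antisym : forall x y, le x y -> le y x -> x = y
}.

(** Data of a (pre)sheaf of frames: sections [sec u], restriction maps
    [res u v H : sec u -> sec v] for [H : v <= u], and the left adjoints
    [ladj u v H = l_{v,u} : sec v -> sec u]. *)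
Record FSheaf (O : FrameOps) := {
  sec : O -> FrameOps;
  res : forall u v : O, fle v u -> sec u -> sec v;
  ladj : forall u v : O, fle v u -> sec v -> sec u
}.

Arguments sec {O} f _.
Arguments res {O} f u v _ _.
Arguments ladj {O} f u v _ _.

Definition is_sheaf (O : FrameOps) (F : FSheaf O) : Prop :=
  (forall (u : O) (H : fle u u) (x : sec F u), res F u u H x = x) /\
  (forall (u v w : O) (H1 : fle v u) (H2 : fle w v) (H3 : fle w u) (x : sec F u),
      res F v w H2 (res F u v H1 x) = res F u w H3 x) /\
  (forall (u : O) (I : Type) (c : I -> O) (Hc : forall i, fle (c i) u),
      u = fsup I c ->
      forall s : forall i, sec F (c i),
      (forall i j (H1 : fle (fmeet (c i) (c j)) (c i)) (H2 : fle (fmeet (c i) (c j)) (c j)),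
          res F (c i) _ H1 (s i) = res F (c j) _ H2 (s j)) ->
      exists t : sec F u,
        (forall i, res F u (c i) (Hc i) t = s i) /\
        (forall t' : sec F u, (forall i, res F u (c i) (Hc i) t' = s i) -> t' = t)).

Definition is_posheaf (O : FrameOps) (F : FSheaf O) : Prop :=
  is_sheaf F /\
  (forall u : O, is_poset (@fle (sec F u))) /\
  (forall (u v : O) (H : fle v u) (x y : sec F u),
      fle x y -> fle (res F u v H x) (res F u v H y)) /\
  (forall (u : O) (I : Type) (c : I -> O) (Hc : forall i, fle (c i) u),
      u = fsup I c ->
      forall s t : sec F u, (forall i, fle (res F u (c i) (Hc i) s) (res F u (c i) (Hc i) t)) ->
      fle s t).

Definition is_frame_sheaf (O : FrameOps) (F : FSheaf O) : Prop :=
  is_posheaf F /\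
  (forall u : O, is_frame (sec F u)) /\
  (forall (u v : O) (H : fle v u) (y : sec F v), exists x : sec F u, res F u v H x = y) /\
  (forall (u v : O) (H : fle v u) (y : sec F v) (x : sec F u),
      fle (ladj F u v H y) x <-> fle y (res F u v H x)) /\
  (forall (u v : O) (H : fle v u), exists r : sec F v -> sec F u,
      forall (x : sec F u) (y : sec F v), fle (res F u v H x) y <-> fle x (r y)) /\
  (forall (u v : O) (H : fle v u) (x : sec F u) (y : sec F v),
      fmeet x (ladj F u v H y) = ladj F u v H (fmeet (res F u v H x) y)).

Definition is_fs_mor (O : FrameOps) (F G : FSheaf O)
    (a : forall u : O, sec F u -> sec G u) : Prop :=
  (forall u : O, is_frame_hom (a u)) /\
  (forall (u v : O) (H : fle v u) (x : sec F u), a v (res F u v H x) = res G u v H (a u x)) /\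
  (forall (u v : O) (H : fle v u) (y : sec F v), a u (ladj F u v H y) = ladj G u v H (a v y)).

Record FSh (O : FrameOps) := {
  fsd :> FSheaf O;
  fs_ok : is_frame_sheaf fsd
}.

Record FSMor (O : FrameOps) (F G : FSh O) := {
  fm :> forall u : O, sec F u -> sec G u;
  fm_ok : is_fs_mor fm
}.

Record CObj (O : FrameOps) := {
  cL : FrameOps;
  cf : O -> cL;
  cL_frame : is_frame cL;
  cf_hom : is_frame_hom cf
}.

Record CMor (O : FrameOps) (A B : CObj O) := {
  ch :> cL A -> cL B;
  ch_hom : is_frame_hom ch;
  ch_comm : forall u : O, ch (cf A u) = cf B u
}.

Lemma le_meet_l (L : FrameOps) (HL : is_frame L) (x y a : L) :
  fle x a -> fle (fmeet x y) a.
Proof.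
  intro Hx. apply (fr_trans HL) with x; auto.
  apply (proj1 (fr_meet HL x y (fmeet x y)) (fr_refl HL _)).
Qed.

Lemma le_meet_r (L : FrameOps) (HL : is_frame L) (x a : L) : fle (fmeet x a) a.
Proof. apply (proj1 (fr_meet HL x a (fmeet x a)) (fr_refl HL _)). Qed.

Lemma hom_mono (L M : FrameOps) (HL : is_frame L) (HM : is_frame M) (h : L -> M)
  (Hh : is_frame_hom h) (x y : L) : fle x y -> fle (h x) (h y).
Proof.
  intro Hxy.
  assert (E : x = fmeet x y).
  { apply (fr_antisym HL).
    - apply (fr_meet HL). split; [apply (fr_refl HL)| exact Hxy].
    - apply (le_meet_l HL). apply (fr_refl HL). }
  rewrite E, (fh_meet Hh). apply le_meet_r; exact HM.
Qed.

Lemma cmor_le (O : FrameOps) (A B : CObj O) (h : CMor A B) (u : O) (x : cL A) :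
  fle x (cf A u) -> fle (h x) (cf B u).
Proof.
  intro Hx. rewrite <- (ch_comm h u).
  exact (hom_mono (cL_frame A) (cL_frame B) (ch_hom h) Hx).
Qed.

Definition down_ops (L : FrameOps) (HL : is_frame L) (a : L) : FrameOps := {|
  fcar := { x : L | fle x a };
  fle := fun x y => fle (proj1_sig x) (proj1_sig y);
  fmeet := fun x y => exist _ (fmeet (proj1_sig x) (proj1_sig y))
                           (le_meet_l HL (proj1_sig y) (proj2_sig x));
  fsup := fun I g => exist _ (fsup I (fun i => proj1_sig (g i)))
                          (proj2 (@fr_sup L HL I (fun i => proj1_sig (g i)) a)
                                 (fun i => proj2_sig (g i)));
  ftop := exist (fun x => fle x a) a (fr_refl HL a)
|}.

(** Phi(f)(u) = {x in L | x <= f u}, restriction x |-> x /\ f v; the left adjoint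
    of the restriction is the inclusion (left adjoints are unique). *)
Definition Phi_data (O : FrameOps) (HO : is_frame O) (A : CObj O) : FSheaf O := {|
  sec := fun u => down_ops (cL_frame A) (cf A u);
  res := fun u v H x => exist _ (fmeet (proj1_sig x) (cf A v))
                             (le_meet_r (cL_frame A) (proj1_sig x) (cf A v));
  ladj := fun u v H y => exist _ (proj1_sig y)
             (fr_trans (cL_frame A) (proj2_sig y)
                (hom_mono HO (cL_frame A) (cf_hom A) H))
|}.

Definition Phi_mor (O : FrameOps) (HO : is_frame O) (A B : CObj O) (h : CMor A B) :
  forall u : O, sec (Phi_data HO A) u -> sec (Phi_data HO B) u :=
  fun u x => exist _ (h (proj1_sig x)) (cmor_le h (proj2_sig x)).

Definition Psi_L (O : FrameOps) (F : FSheaf O) : FrameOps := sec F ftop.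

Definition Psi_f (O : FrameOps) (HO : is_frame O) (F : FSheaf O) : O -> Psi_L F :=
  fun u => ladj F ftop u (fr_top HO u) ftop.

Definition Psi_mor (O : FrameOps) (F G : FSh O) (a : FSMor F G) : Psi_L F -> Psi_L G :=
  a ftop.

Arguments is_fs_mor {O} F G a.
Arguments Phi_mor {O} HO {A B} h u x.
Arguments Phi_data {O} HO A.
Arguments Psi_f {O} HO F u.

(* Main.v *)
Require Import Defs.
From Stdlib Require Import ProofIrrelevance FunctionalExtensionality.

Lemma mle_l {L : FrameOps} (HL : is_frame L) (x y : L) : fle (fmeet x y) x.
Proof. apply (proj1 (fr_meet HL x y (fmeet x y)) (fr_refl HL _)). Qed.
Lemma mle_r {L : FrameOps} (HL : is_frame L) (x y : L) : fle (fmeet x y) y.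
Proof. apply (proj1 (fr_meet HL x y (fmeet x y)) (fr_refl HL _)). Qed.
Lemma mglb {L : FrameOps} (HL : is_frame L) (x y z : L) : fle z x -> fle z y -> fle z (fmeet x y).
Proof. intros; apply (fr_meet HL); auto. Qed.
Lemma sup_ub {L : FrameOps} (HL : is_frame L) I (g : I -> L) i : fle (g i) (fsup I g).
Proof. apply (proj1 (fr_sup HL g (fsup I g)) (fr_refl HL _)). Qed.
Lemma sup_lub {L : FrameOps} (HL : is_frame L) I (g : I -> L) z :
  (forall i, fle (g i) z) -> fle (fsup I g) z.
Proof. intros; apply (fr_sup HL); auto. Qed.
Lemma ftr {L : FrameOps} (HL : is_frame L) (x y z : L) : fle x y -> fle y z -> fle x z.
Proof. apply (fr_trans HL). Qed.
Arguments ftr {L} HL {x y z}.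
Lemma meet_le_eq {L : FrameOps} (HL : is_frame L) (x y : L) : fle x y -> fmeet x y = x.
Proof. intro H. apply (fr_antisym HL). apply mle_l; auto. apply mglb; auto. apply (fr_refl HL). Qed.
Lemma meet_top {L : FrameOps} (HL : is_frame L) (x : L) : fmeet x ftop = x.
Proof. apply meet_le_eq; auto. apply (fr_top HL). Qed.
Lemma meet_comm {L : FrameOps} (HL : is_frame L) (x y : L) : fmeet x y = fmeet y x.
Proof. apply (fr_antisym HL); apply mglb; auto using mle_l, mle_r. Qed.
Lemma distr_r {L : FrameOps} (HL : is_frame L) (x : L) I (g : I -> L) :
  fmeet (fsup I g) x = fsup I (fun i => fmeet (g i) x).
Proof.
  rewrite meet_comm, (fr_distr HL); auto. f_equal. apply functional_extensionality.
  intro; apply meet_comm; auto.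
Qed.
Lemma meet_mono {L : FrameOps} (HL : is_frame L) (x y x' y' : L) :
  fle x x' -> fle y y' -> fle (fmeet x y) (fmeet x' y').
Proof. intros. apply mglb; auto; eapply ftr; eauto; [apply mle_l|apply mle_r]; auto. Qed.
Lemma sig_eq (A : Type) (P : A -> Prop) (x y : sig P) : proj1_sig x = proj1_sig y -> x = y.
Proof. destruct x, y; simpl; intro E; subst. f_equal. apply proof_irrelevance. Qed.

Definition imp (L : FrameOps) (a b : L) : L := fsup {z : L | fle (fmeet z a) b} (@proj1_sig _ _).
Arguments imp {L} a b.
Lemma imp_spec {L : FrameOps} (HL : is_frame L) (a b z : L) :
  fle z (imp a b) <-> fle (fmeet z a) b.
Proof.
  split; intro H.
  - apply ftr with (fmeet (imp a b) a); auto. apply meet_mono; auto. apply (fr_refl HL).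
    unfold imp. rewrite distr_r; auto. apply sup_lub; auto. intros [w Hw]; exact Hw.
  - unfold imp. apply (sup_ub HL _ (fun w : {z : L | fle (fmeet z a) b} => proj1_sig w) (exist _ z H)).
Qed.

Lemma down_frame {L : FrameOps} (HL : is_frame L) (a : L) : is_frame (down_ops HL a).
Proof.
  constructor; simpl.
  - intros; apply (fr_refl HL).
  - intros; eapply ftr; eauto.
  - intros; apply sig_eq, (fr_antisym HL); auto.
  - intros; apply (fr_meet HL).
  - intros [x Hx]; exact Hx.
  - intros; split; intros H.
    + intro i. eapply ftr; [auto|apply (sup_ub HL _ (fun i => proj1_sig (g i)))|exact H].
    + apply sup_lub; auto.
  - intros; apply sig_eq; simpl. apply (fr_distr HL).
Qed.

Lemma Phi_is_frame_sheaf (O : FrameOps) (HO : is_frame O) (A : CObj O) :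
  is_frame_sheaf (Phi_data HO A).
Proof.
  destruct A as [L f HL Hf]. unfold is_frame_sheaf, is_posheaf, is_sheaf; simpl.
  assert (Hm : forall u v : O, fle v u -> fle (f v) (f u)).
  { intros; apply (hom_mono HO HL Hf); auto. }
  assert (Hsup : forall (u : O) (I : Type) (c : I -> O), u = fsup I c ->
             f u = fsup I (fun i => f (c i))).
  { intros; subst; apply (fh_sup Hf). }
  split; [split; [split|split]|split].
  - intros u H [x Hx]. apply sig_eq; simpl. apply meet_le_eq; auto.
  - split.
    + intros u v w H1 H2 H3 [x Hx]. apply sig_eq; simpl.
      apply (fr_antisym HL).
      * apply mglb; auto. exact (ftr HL (mle_l HL _ _) (mle_l HL _ _)). apply (mle_r HL).
      * apply mglb; auto. apply mglb; auto. apply (mle_l HL). exact (ftr HL (mle_r HL _ _) (Hm _ _ H2)).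
        apply (mle_r HL).
    + intros u I c Hc Hu s Hcomp.
      assert (Hs : forall i, fle (proj1_sig (s i)) (f u)).
      { intro i. eapply ftr; eauto. exact (proj2_sig (s i)). }
      assert (Ht : fle (fsup I (fun i => proj1_sig (s i))) (f u)).
      { apply sup_lub; auto. }
      exists (exist (fun x => fle x (f u)) _ Ht). split.
      * intro i. apply sig_eq; simpl. apply (fr_antisym HL).
        -- rewrite distr_r; auto. apply sup_lub; auto. intro j.
           assert (Hij : fle (fmeet (c i) (c j)) (c i)) by (apply (mle_l HO)).
           assert (Hij' : fle (fmeet (c i) (c j)) (c j)) by (apply (mle_r HO)).
           pose proof (f_equal (@proj1_sig _ _) (Hcomp i j Hij Hij')) as E. simpl in E.
           apply ftr with (fmeet (proj1_sig (s j)) (f (fmeet (c i) (c j)))); auto.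
           ++ apply mglb; auto. apply (mle_l HL); auto. rewrite (fh_meet Hf). apply mglb; auto.
              apply (mle_r HL); auto. eapply ftr; auto. apply (mle_l HL). auto. exact (proj2_sig (s j)).
           ++ rewrite <- E. apply (mle_l HL); auto.
        -- apply mglb; auto. apply (sup_ub HL _ (fun i => proj1_sig (s i))). exact (proj2_sig (s i)).
      * intros [t' Ht'] Hr. apply sig_eq; simpl.
        rewrite <- (meet_le_eq HL t' (f u) Ht'), (Hsup u I c Hu), (fr_distr HL). f_equal.
        apply functional_extensionality. intro i.
        exact (f_equal (@proj1_sig _ _) (Hr i)).
  - intro u. constructor; simpl.
    + intros; apply (fr_refl HL).
    + intros; eapply ftr; eauto.
    + intros; apply sig_eq, (fr_antisym HL); auto.
  - split.
    + intros u v H [x Hx] [y Hy]; simpl; intro Hxy. apply meet_mono; auto. apply (fr_refl HL).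
    + intros u I c Hc Hu [s Hs0] [t Ht0]; simpl; intro Hst.
      apply ftr with (fmeet s (fsup I (fun i => f (c i)))); auto.
      * apply mglb; auto. apply (fr_refl HL). rewrite <- (Hsup u I c Hu); auto.
      * rewrite (fr_distr HL). apply sup_lub; auto. intro i.
        exact (ftr HL (Hst i) (mle_l HL _ _)).
  - intro u; apply down_frame.
  - split; [|split; [|split]].
    + intros u v H [y Hy]. exists (exist (fun x => fle x (f u)) y (ftr HL Hy (Hm u v H))). apply sig_eq; simpl.
      apply meet_le_eq; auto.
    + intros u v H [y Hy] [x Hx]; simpl. split; intro Hyx.
      * apply mglb; auto.
      * eapply ftr; eauto. apply (mle_l HL); auto.
    + intros u v H.
      exists (fun y => exist (fun x => fle x (f u)) (fmeet (f u) (imp (f v) (proj1_sig y)))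
                       (mle_l HL _ _)).
      intros [x Hx] [y Hy]; simpl. split; intro H1.
      * apply mglb; auto. apply imp_spec; auto.
      * eapply ftr; auto. 2: apply imp_spec; eauto. apply (fr_refl HL).
        eapply ftr; auto. exact H1. apply (mle_r HL); auto.
    + intros u v H [x Hx] [y Hy]. apply sig_eq; simpl.
      apply (fr_antisym HL).
      * apply mglb; auto. apply mglb; auto. apply (mle_l HL). exact (ftr HL (mle_r HL _ _) Hy). apply (mle_r HL).
      * apply meet_mono; auto. apply (mle_l HL); auto. apply (fr_refl HL).
Qed.

Lemma Phi_mor_ok (O : FrameOps) (HO : is_frame O) (A B : CObj O) (h : CMor A B) :
  is_fs_mor (Phi_data HO A) (Phi_data HO B) (Phi_mor HO h).
Proof.
  split; [|split].
  - intro u. constructor; simpl.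
    + apply sig_eq; simpl. apply (ch_comm h).
    + intros; apply sig_eq; simpl. apply (fh_meet (ch_hom h)).
    + intros; apply sig_eq; simpl. apply (fh_sup (ch_hom h)).
  - intros; apply sig_eq; simpl. rewrite (fh_meet (ch_hom h)), (ch_comm h). reflexivity.
  - intros; apply sig_eq; simpl. reflexivity.
Qed.

Lemma top_le_f {O : FrameOps} {A : CObj O} (x : cL A) : fle x (cf A ftop).
Proof. rewrite (fh_top (cf_hom A)). apply (fr_top (cL_frame A)). Qed.

Definition eta0 (O : FrameOps) (HO : is_frame O) (A : CObj O) :
  Psi_L (Phi_data HO A) -> cL A := fun x => proj1_sig x.
Definition eta1 (O : FrameOps) (HO : is_frame O) (A : CObj O) :
  cL A -> Psi_L (Phi_data HO A) :=
  fun x => exist (fun y => fle y (cf A ftop)) x (top_le_f x).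

Lemma eta_part (O : FrameOps) (HO : is_frame O) :
  (exists (eta : forall A : CObj O, Psi_L (Phi_data HO A) -> cL A)
          (eta' : forall A : CObj O, cL A -> Psi_L (Phi_data HO A)),
      (forall A : CObj O,
          is_frame_hom (eta A) /\ (forall u : O, eta A (Psi_f HO (Phi_data HO A) u) = cf A u) /\
          is_frame_hom (eta' A) /\ (forall u : O, eta' A (cf A u) = Psi_f HO (Phi_data HO A) u) /\
          (forall x, eta A (eta' A x) = x) /\ (forall y, eta' A (eta A y) = y)) /\
      (forall (A B : CObj O) (h : CMor A B) (x : Psi_L (Phi_data HO A)),
          eta B (Phi_mor HO h ftop x) = h (eta A x))).
Proof.
  exists (eta0 O HO), (eta1 O HO). split.
  - intro A. split; [|split; [|split; [|split; [|split]]]].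
    + constructor; unfold eta0; simpl.
      * apply (fh_top (cf_hom A)).
      * reflexivity.
      * reflexivity.
    + intro u; reflexivity.
    + constructor; intros; apply sig_eq; unfold eta1; simpl; try reflexivity.
      symmetry; apply (fh_top (cf_hom A)).
    + intro u; apply sig_eq; reflexivity.
    + intro; reflexivity.
    + intro; apply sig_eq; reflexivity.
  - intros; reflexivity.
Qed.


Lemma sfr {O : FrameOps} {F : FSheaf O} (HF : is_frame_sheaf F) (u : O) : is_frame (sec F u).
Proof. exact (proj1 (proj2 HF) u). Qed.

Lemma res_id {O : FrameOps} {F : FSheaf O} (HF : is_frame_sheaf F) {u : O} (H : fle u u) x :
  res F u u H x = x.
Proof. destruct HF as [[[Hid _] _] _]. apply Hid. Qed.

Lemma res_comp {O : FrameOps} {F : FSheaf O} (HF : is_frame_sheaf F) {u v w : O}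
  (H1 : fle v u) (H2 : fle w v) (H3 : fle w u) x :
  res F v w H2 (res F u v H1 x) = res F u w H3 x.
Proof. destruct HF as [[[_ [Hc _]] _] _]. apply Hc. Qed.

Lemma res_mono {O : FrameOps} {F : FSheaf O} (HF : is_frame_sheaf F) {u v : O} (H : fle v u) x y :
  fle x y -> fle (res F u v H x) (res F u v H y).
Proof. destruct HF as [[_ [_ [Hm _]]] _]. apply Hm. Qed.

Lemma res_pos3 {O : FrameOps} {F : FSheaf O} (HF : is_frame_sheaf F) (u : O) (I : Type) (c : I -> O)
  (Hc : forall i, fle (c i) u) : u = fsup I c ->
  forall s t : sec F u, (forall i, fle (res F u (c i) (Hc i) s) (res F u (c i) (Hc i) t)) ->
  fle s t.
Proof. destruct HF as [[_ [_ [_ Hp]]] _]. apply Hp. Qed.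

Lemma res_surj {O : FrameOps} {F : FSheaf O} (HF : is_frame_sheaf F) {u v : O} (H : fle v u) y :
  exists x, res F u v H x = y.
Proof. destruct HF as [_ [_ [Hs _]]]. apply Hs. Qed.

Lemma ladj_adj {O : FrameOps} {F : FSheaf O} (HF : is_frame_sheaf F) {u v : O} (H : fle v u) y x :
  fle (ladj F u v H y) x <-> fle y (res F u v H x).
Proof. destruct HF as [_ [_ [_ [Ha _]]]]. apply Ha. Qed.

Lemma res_radj {O : FrameOps} {F : FSheaf O} (HF : is_frame_sheaf F) {u v : O} (H : fle v u) :
  exists r : sec F v -> sec F u,
      forall (x : sec F u) (y : sec F v), fle (res F u v H x) y <-> fle x (r y).
Proof. destruct HF as [_ [_ [_ [_ [Hr _]]]]]. apply Hr. Qed.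

Lemma frob {O : FrameOps} {F : FSheaf O} (HF : is_frame_sheaf F) {u v : O} (H : fle v u) x y :
  fmeet x (ladj F u v H y) = ladj F u v H (fmeet (res F u v H x) y).
Proof. destruct HF as [_ [_ [_ [_ [_ Hf]]]]]. apply Hf. Qed.

Lemma unit_le {O : FrameOps} {F : FSheaf O} (HF : is_frame_sheaf F) {u v : O} (H : fle v u) y :
  fle y (res F u v H (ladj F u v H y)).
Proof. apply (ladj_adj HF). apply (fr_refl (sfr HF u)). Qed.

Lemma res_ladj {O : FrameOps} {F : FSheaf O} (HF : is_frame_sheaf F) {u v : O} (H : fle v u) y :
  res F u v H (ladj F u v H y) = y.
Proof.
  apply (fr_antisym (sfr HF v)); [|apply (unit_le HF)].
  destruct (res_surj HF H y) as [x Hx]. rewrite <- Hx at 2.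
  apply res_mono; auto. apply (ladj_adj HF). rewrite Hx. apply (fr_refl (sfr HF v)).
Qed.

Lemma ladj_mono {O : FrameOps} {F : FSheaf O} (HF : is_frame_sheaf F) {u v : O} (H : fle v u) y y' :
  fle y y' -> fle (ladj F u v H y) (ladj F u v H y').
Proof. intro. apply (ladj_adj HF). eapply (fr_trans (sfr HF v)); eauto. apply (unit_le HF). Qed.

Lemma res_top {O : FrameOps} {F : FSheaf O} (HF : is_frame_sheaf F) {u v : O} (H : fle v u) :
  res F u v H ftop = ftop.
Proof.
  apply (fr_antisym (sfr HF v)). apply (fr_top (sfr HF v)).
  destruct (res_surj HF H ftop) as [x Hx]. rewrite <- Hx at 1.
  apply res_mono; auto. apply (fr_top (sfr HF u)).
Qed.

Lemma res_meet {O : FrameOps} {F : FSheaf O} (HF : is_frame_sheaf F) {u v : O} (H : fle v u) x y :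
  res F u v H (fmeet x y) = fmeet (res F u v H x) (res F u v H y).
Proof.
  pose proof (sfr HF u) as Hu; pose proof (sfr HF v) as Hv.
  apply (fr_antisym Hv).
  - apply mglb; auto; apply res_mono; auto; [apply (mle_l Hu)|apply (mle_r Hu)].
  - apply (ladj_adj HF). apply mglb; auto; apply (ladj_adj HF); [apply (mle_l Hv)|apply (mle_r Hv)].
Qed.

Lemma res_sup {O : FrameOps} {F : FSheaf O} (HF : is_frame_sheaf F) {u v : O} (H : fle v u) I g :
  res F u v H (fsup I g) = fsup I (fun i => res F u v H (g i)).
Proof.
  pose proof (sfr HF u) as Hu; pose proof (sfr HF v) as Hv.
  destruct (res_radj HF H) as [r Hr].
  apply (fr_antisym Hv).
  - apply Hr. apply sup_lub; auto. intro i. apply Hr.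
    apply (sup_ub Hv _ (fun i => res F u v H (g i))).
  - apply sup_lub; auto. intro i. apply res_mono; auto. apply (sup_ub Hu).
Qed.

Lemma ladj_self {O : FrameOps} {F : FSheaf O} (HF : is_frame_sheaf F) {u : O} (H : fle u u) y :
  ladj F u u H y = y.
Proof. rewrite <- (res_ladj HF H y) at 2. symmetry. apply res_id; auto. Qed.

Lemma ladj_comp_le {O : FrameOps} {F : FSheaf O} (HF : is_frame_sheaf F) {w u v : O}
  (H1 : fle u w) (H2 : fle v u) (H3 : fle v w) y :
  fle (ladj F w v H3 y) (ladj F w u H1 (ladj F u v H2 y)).
Proof.
  apply (ladj_adj HF). rewrite <- (res_comp HF H1 H2 H3), res_ladj, res_ladj; auto.
  apply (fr_refl (sfr HF v)).
Qed.

Lemma res_e {O : FrameOps} (HO : is_frame O) {F : FSheaf O} (HF : is_frame_sheaf F) (u : O)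
  (H : fle u ftop) : res F ftop u H (Psi_f HO F u) = ftop.
Proof. unfold Psi_f. rewrite (proof_irrelevance _ H (fr_top HO u)). apply res_ladj; auto. Qed.

Lemma e_ge {O : FrameOps} (HO : is_frame O) {F : FSheaf O} (HF : is_frame_sheaf F) (u : O) x :
  fle (Psi_f HO F u) x <-> fle ftop (res F ftop u (fr_top HO u) x).
Proof. unfold Psi_f. apply ladj_adj; auto. Qed.

Lemma e_mono {O : FrameOps} (HO : is_frame O) {F : FSheaf O} (HF : is_frame_sheaf F) (u v : O) :
  fle u v -> fle (Psi_f HO F u) (Psi_f HO F v).
Proof.
  intro H. apply e_ge; auto.
  rewrite <- (res_comp HF (fr_top HO v) H (fr_top HO u)), res_e, res_top; auto.
  apply (fr_refl (sfr HF u)).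
Qed.

Lemma Psi_f_hom {O : FrameOps} (HO : is_frame O) (F : FSheaf O) (HF : is_frame_sheaf F) :
  is_frame_hom (Psi_f HO F).
Proof.
  pose proof (sfr HF ftop) as H1.
  constructor.
  - unfold Psi_f. apply ladj_self; auto.
  - intros u v. apply (fr_antisym H1).
    + apply mglb; auto; apply e_mono; auto; [apply (mle_l HO)|apply (mle_r HO)].
    + set (m := fmeet u v).
      set (c := fun b : bool => if b then u else v).
      set (w := fsup bool c).
      assert (Hc : forall b, fle (c b) w) by (intro b; apply (sup_ub HO bool c b)).
      assert (Hmv : fle m v) by apply (mle_r HO).
      assert (Hmu : fle m u) by apply (mle_l HO).
      set (b0 := ladj F v m Hmv ftop).
      set (s := fun b : bool => match b as b' return sec F (c b') with
                                | true => ftop | false => b0 end).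
      assert (Hb0 : forall z (Hz : fle z m) (H : fle z v), res F v z H b0 = ftop).
      { intros z Hz H. rewrite <- (res_comp HF Hmv Hz H). unfold b0. rewrite res_ladj, res_top; auto. }
      destruct (proj2 (proj2 (proj1 (proj1 HF))) w bool c Hc eq_refl s) as [t [Ht _]].
      { intros i j H2 H3. destruct i, j; simpl in *.
        - f_equal. apply proof_irrelevance.
        - rewrite res_top, Hb0; auto; apply (fr_refl HO).
        - rewrite res_top, Hb0; auto. unfold m. apply mglb; auto.
        - f_equal. apply proof_irrelevance. }
      pose proof (Ht true) as Htu. pose proof (Ht false) as Htv. simpl in Htu, Htv.
      assert (Hw : fle w ftop) by apply (fr_top HO).
      apply (fr_trans H1) with (fmeet (ladj F ftop w Hw t) (Psi_f HO F v)).
      * apply meet_mono; auto. 2: apply (fr_refl H1).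
        apply e_ge; auto. rewrite <- (res_comp HF Hw (Hc true) (fr_top HO u)), res_ladj; auto.
        simpl. rewrite Htu. apply (fr_refl (sfr HF u)).
      * unfold Psi_f at 1. rewrite (frob HF), meet_top; auto. 2: apply sfr; auto.
        apply (ladj_adj HF). fold m.
        rewrite <- (res_comp HF Hw (Hc false) (fr_top HO v)), res_ladj; auto.
        rewrite (Ht false). unfold s, b0. apply (ladj_adj HF).
        rewrite (res_comp HF (fr_top HO v) Hmv (fr_top HO m)), res_e; auto.
        apply (fr_refl (sfr HF m)).
  - intros I c. apply (fr_antisym H1).
    + apply e_ge; auto.
      assert (Hc : forall i, fle (c i) (fsup I c)) by (intro i; apply (sup_ub HO I c i)).
      apply (res_pos3 HF (fsup I c) I c Hc eq_refl). intro i.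
      rewrite res_top, (res_comp HF (fr_top HO _) (Hc i) (fr_top HO (c i))); auto.
      rewrite <- (res_e HO HF (c i) (fr_top HO (c i))). apply res_mono; auto.
      apply (sup_ub H1 I (fun i => Psi_f HO F (c i))).
    + apply sup_lub; auto. intro i. apply e_mono; auto. apply (sup_ub HO I c i).
Qed.

Lemma inv_hom {L M : FrameOps} (g : L -> M) (g' : M -> L) :
  is_frame_hom g -> (forall x, g (g' x) = x) -> (forall y, g' (g y) = y) -> is_frame_hom g'.
Proof.
  intros Hg K1 K2. constructor.
  - rewrite <- (fh_top Hg). apply K2.
  - intros x y. rewrite <- (K1 x) at 1. rewrite <- (K1 y) at 1. rewrite <- (fh_meet Hg). apply K2.
  - intros I h. replace h with (fun i => g (g' (h i))) at 1.
    + rewrite <- (fh_sup Hg). apply K2.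
    + apply functional_extensionality; intro; apply K1.
Qed.

Definition eps {O : FrameOps} (HO : is_frame O) (F : FSh O) (u : O)
  (x : {x : Psi_L F | fle x (Psi_f HO F u)}) : sec F u :=
  res F ftop u (fr_top HO u) (proj1_sig x).

Definition eps' {O : FrameOps} (HO : is_frame O) (F : FSh O) (u : O) (y : sec F u) :
  {x : Psi_L F | fle x (Psi_f HO F u)} :=
  exist (fun x => fle x (Psi_f HO F u)) (ladj F ftop u (fr_top HO u) y)
    (ladj_mono (fs_ok F) (fr_top HO u) y ftop (fr_top (sfr (fs_ok F) u) y)).

Lemma eps_eps' {O : FrameOps} (HO : is_frame O) (F : FSh O) u y : eps HO F u (eps' HO F u y) = y.
Proof. unfold eps, eps'; simpl. apply res_ladj, fs_ok. Qed.

Lemma eps'_eps {O : FrameOps} (HO : is_frame O) (F : FSh O) u x : eps' HO F u (eps HO F u x) = x.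
Proof.
  pose proof (fs_ok F) as HF. apply sig_eq. unfold eps, eps'; simpl. destruct x as [x Hx]; simpl.
  rewrite <- (meet_top (sfr HF u) (res F ftop u (fr_top HO u) x)), <- (frob HF).
  apply meet_le_eq; auto. apply sfr; auto.
Qed.

Lemma eps_ok {O : FrameOps} (HO : is_frame O) (F : FSh O) (H1 : is_frame (Psi_L F))
  (H2 : is_frame_hom (Psi_f HO F)) :
  is_fs_mor (Phi_data HO (Build_CObj H1 H2)) F (eps HO F).
Proof.
  pose proof (fs_ok F) as HF. split; [|split].
  - intro u. constructor; unfold eps; simpl.
    + apply res_e; auto.
    + intros; apply res_meet; auto.
    + intros; apply res_sup; auto.
  - intros u v H [x Hx]. unfold eps; simpl.
    change (res F ftop v (fr_top HO v) (@fmeet (sec F ftop) x (Psi_f HO F v)) = res F u v H (res F ftop u (fr_top HO u) x)).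
    rewrite (res_meet HF (fr_top HO v) x (Psi_f HO F v)), res_e, meet_top, (res_comp HF (fr_top HO u) H (fr_top HO v)); auto. apply sfr; auto.
  - intros u v H [y Hy]. unfold eps; simpl.
    set (z := res F ftop u (fr_top HO u) y).
    assert (Hz : fle z (ladj F u v H ftop)).
    { unfold z. rewrite <- (res_ladj HF (fr_top HO u) (ladj F u v H ftop)).
      apply res_mono; auto. apply (fr_trans (sfr HF ftop)) with (Psi_f HO F v); auto.
      apply (ladj_comp_le HF). }
    rewrite <- (meet_le_eq (sfr HF u) _ _ Hz), (frob HF), meet_top; auto.
    2: apply sfr; auto. unfold z. rewrite (res_comp HF (fr_top HO u) H (fr_top HO v)); auto.
Qed.

Lemma eps'_ok {O : FrameOps} (HO : is_frame O) (F : FSh O) (H1 : is_frame (Psi_L F))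
  (H2 : is_frame_hom (Psi_f HO F)) :
  is_fs_mor F (Phi_data HO (Build_CObj H1 H2)) (eps' HO F).
Proof.
  destruct (eps_ok HO F H1 H2) as [Ea [Eb Ec]]. split; [|split].
  - intro u. eapply inv_hom; [exact (Ea u)| |].
    + intro; apply eps_eps'.
    + intro; apply eps'_eps.
  - intros u v H x.
    rewrite <- (eps'_eps HO F v (res (Phi_data HO (Build_CObj H1 H2)) u v H (eps' HO F u x))). f_equal.
    rewrite Eb, eps_eps'. reflexivity.
  - intros u v H y.
    rewrite <- (eps'_eps HO F u (ladj (Phi_data HO (Build_CObj H1 H2)) u v H (eps' HO F v y))). f_equal.
    rewrite Ec, eps_eps'. reflexivity.
Qed.

Theorem theorem3p1 (O : FrameOps) (HO : is_frame O) :
  (* Phi is well defined on objects: Phi(f) is a frame sheaf *)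
  (forall A : CObj O, is_frame_sheaf (Phi_data HO A)) /\
  (* Phi is well defined on morphisms: Phi(h) is a frame morphism *)
  (forall (A B : CObj O) (h : CMor A B),
      is_fs_mor (Phi_data HO A) (Phi_data HO B) (Phi_mor HO h)) /\
  (* Psi is well defined on objects: F(1_X) is a frame and u |-> l_{u,1}(top) a frame hom *)
  (forall F : FSh O, is_frame (Psi_L F) /\ is_frame_hom (Psi_f HO F)) /\
  (* Psi is well defined on morphisms: alpha_{1_X} is a morphism in O(X)/Frm *)
  (forall (F G : FSh O) (a : FSMor F G),
      is_frame_hom (Psi_mor a) /\ (forall u : O, Psi_mor a (Psi_f HO F u) = Psi_f HO G u)) /\
  (* natural isomorphism Psi o Phi ~= Id on O(X)/Frm *)
  (exists (eta : forall A : CObj O, Psi_L (Phi_data HO A) -> cL A)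
          (eta' : forall A : CObj O, cL A -> Psi_L (Phi_data HO A)),
      (forall A : CObj O,
          is_frame_hom (eta A) /\ (forall u : O, eta A (Psi_f HO (Phi_data HO A) u) = cf A u) /\
          is_frame_hom (eta' A) /\ (forall u : O, eta' A (cf A u) = Psi_f HO (Phi_data HO A) u) /\
          (forall x, eta A (eta' A x) = x) /\ (forall y, eta' A (eta A y) = y)) /\
      (forall (A B : CObj O) (h : CMor A B) (x : Psi_L (Phi_data HO A)),
          eta B (Phi_mor HO h ftop x) = h (eta A x))) /\
  (* natural isomorphism Phi o Psi ~= Id on FrmSh(X) *)
  (exists (eps : forall (F : FSh O) (u : O),
              {x : Psi_L F | fle x (Psi_f HO F u)} -> sec F u)
          (eps' : forall (F : FSh O) (u : O),
              sec F u -> {x : Psi_L F | fle x (Psi_f HO F u)}),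
      (forall (F : FSh O) (H1 : is_frame (Psi_L F)) (H2 : is_frame_hom (Psi_f HO F)),
          is_fs_mor (Phi_data HO (Build_CObj H1 H2)) F (eps F) /\
          is_fs_mor F (Phi_data HO (Build_CObj H1 H2)) (eps' F) /\
          (forall u x, eps F u (eps' F u x) = x) /\
          (forall u y, eps' F u (eps F u y) = y)) /\
      (forall (F G : FSh O) (a : FSMor F G)
              (H1 : is_frame (Psi_L F)) (H2 : is_frame_hom (Psi_f HO F))
              (G1 : is_frame (Psi_L G)) (G2 : is_frame_hom (Psi_f HO G))
              (Ha1 : is_frame_hom (Psi_mor a))
              (Ha2 : forall u : O, Psi_mor a (Psi_f HO F u) = Psi_f HO G u)
              (u : O) (x : {x : Psi_L F | fle x (Psi_f HO F u)}),
          eps G u (Phi_mor HO (Build_CMor (A := Build_CObj H1 H2) (B := Build_CObj G1 G2)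
                                  Ha1 Ha2) u x)
          = a u (eps F u x))).
Proof.
  split; [|split; [|split; [|split; [|split]]]].
  - intro A; apply Phi_is_frame_sheaf.
  - intros; apply Phi_mor_ok.
  - intro F. split. apply (sfr (fs_ok F)). apply Psi_f_hom, fs_ok.
  - intros F G a. destruct (fm_ok a) as [Ha [Hb Hc]]. split.
    + apply Ha.
    + intro u. unfold Psi_mor, Psi_f. rewrite Hc, (fh_top (Ha u)). reflexivity.
  - apply eta_part.
  - exists (eps HO), (eps' HO). split.
    + intros F H1 H2. split; [apply eps_ok|split; [apply eps'_ok|split]].
      * intros; apply eps_eps'.
      * intros; apply eps'_eps.
    + intros F G a H1 H2 G1 G2 Ha1 Ha2 u [x Hx]. unfold eps; simpl.
      destruct (fm_ok a) as [_ [Hb _]]. rewrite Hb. reflexivity.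
Qed.
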